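(* Let $k,\ell\in\mathbb Z_{\ge1}$ with $k\ne\ell$, and $\lambda_1,\lambda_2\in\mathbb C$. Then $\widetilde{\mathrm{Sol}}_{(k,\ell)}(-\lambda_1,-\lambda_2)\neq\{0\}$ if and only if $(\lambda_1,\lambda_2)\in\{(1-k,1-\ell+k),(1-k+\ell,1-\ell)\}$. Moreover $\widetilde{\mathrm{Sol}}_{(k,\ell)}(-(1-k),-(1-\ell+k))=\mathbb C\,p_+^{(k,\ell)}(t)$ and $\widetilde{\mathrm{Sol}}_{(k,\ell)}(-(1-k+\ell),-(1-\ell))=\mathbb C\,p_-^{(k,\ell)}(t)$.
   Context: Let $\vartheta_t=t\frac d{dt}$. For $a,b,\mu\in\mathbb C$ define $D^{(a,b)}(\mu;t)=\frac d{dt}+(\mu+a-\frac b2-1)(a-\vartheta_t)+\frac14t(a-1-\vartheta_t)(a-\vartheta_t)(b-\vartheta_t)$, and $D^{(a,b)}(\mu;-t)=-\frac d{dt}+(\mu+a-\frac b2-1)(a-\vartheta_t)-\frac14t(a-1-\vartheta_t)(a-\vartheta_t)(b-\vartheta_t)$ (substitution $t\mapsto -t$). For $k,\ell\in\mathbb Z_{\ge0}$, $\widetilde{\mathrm{Sol}}_{(k,\ell)}(-\lambda_1,-\lambda_2)=\{p\in\mathbb C[t]:\deg p\le\min(k,\ell),\ D^{(k,\ell)}(\lambda_1;t)p=0,\ D^{(\ell,k)}(\lambda_2;-t)p=0\}$. Polynomials: $p_\pm^{(k,\ell)}(t)=\sum_{m=0}^{\min(k,\ell)}\frac{(\pm1)^m}{2^m}m!\binom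 km\binom\ell m t^m$. *)

(* Defs.v *)
From HB Require Import structures.
From mathcomp Require Import all_boot all_order all_algebra.
Set Implicit Arguments. Unset Strict Implicit. Unset Printing Implicit Defensive.
Import Order.TTheory GRing.Theory Num.Theory.
Local Open Scope ring_scope.

Section Ops.
Variable C : numClosedFieldType.

Definition theta (p : {poly C}) : {poly C} := 'X * p^`().

Definition amth (a : C) (p : {poly C}) : {poly C} := a *: p - theta p.

Definition Dplus (a b mu : C) (p : {poly C}) : {poly C} :=
  p^`() + (mu + a - b / 2%:R - 1) *: amth a p
  + (1 / 4%:R) *: ('X * amth (a - 1) (amth a (amth b p))).

(* D^{(a,b)}(mu; -t) *)
Definition Dminus (a b mu : C) (p : {poly C}) : {poly C} :=
  - p^`() + (mu + a - b / 2%:R - 1) *: amth a p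
  - (1 / 4%:R) *: ('X * amth (a - 1) (amth a (amth b p))).

Definition SolTilde (k l : nat) (lam1 lam2 : C) (p : {poly C}) : Prop :=
  (size p <= (minn k l).+1)%N /\
  Dplus k%:R l%:R lam1 p = 0 /\ Dminus l%:R k%:R lam2 p = 0.

(* p_{+/-}^{(k,l)} ; sgn = false gives p_+, sgn = true gives p_- *)
Definition ppm (sgn : bool) (k l : nat) : {poly C} :=
  \poly_(m < (minn k l).+1)
    ((-1) ^+ (sgn * m) / 2%:R ^+ m * (m`!)%:R * ('C(k, m))%:R * ('C(l, m))%:R).

End Ops.

(* Main.v *)
Require Import Defs.
From HB Require Import structures.
From mathcomp Require Import all_boot all_order all_algebra.
From mathcomp Require Import ring.
Import Order.TTheory GRing.Theory Num.Theory.
Local Open Scope ring_scope.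

Lemma coef_amth (C : numClosedFieldType) (a : C) p m :
  (amth a p)`_m = (a - m%:R) * p`_m.
Proof.
rewrite /amth /theta coefB coefZ coefXM.
case: m => [|m] /=; first by rewrite !subr0.
by rewrite coef_deriv mulrBl mulr_natl.
Qed.

Lemma coefDp0 (C : numClosedFieldType) (a b mu : C) p :
  (Dplus a b mu p)`_0 = p`_1 + (mu + a - b / 2%:R - 1) * (a * p`_0).
Proof.
rewrite /Dplus !coefD coefZ coefZ coefXM coef_amth coef_deriv /=.
by rewrite subr0 mulr0 addr0 mulr1n.
Qed.

Lemma coefDpS (C : numClosedFieldType) (a b mu : C) p m :
  (Dplus a b mu p)`_m.+1 = (m.+2)%:R * p`_m.+2
   + (mu + a - b / 2%:R - 1) * ((a - m.+1%:R) * p`_m.+1)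
   + 1 / 4%:R * ((a - 1 - m%:R) * ((a - m%:R) * ((b - m%:R) * p`_m))).
Proof.
rewrite /Dplus !coefD coefZ coefZ coefXM coef_amth coef_deriv /=.
by rewrite !coef_amth mulr_natl.
Qed.

Lemma coefDm0 (C : numClosedFieldType) (a b mu : C) p :
  (Dminus a b mu p)`_0 = - p`_1 + (mu + a - b / 2%:R - 1) * (a * p`_0).
Proof.
rewrite /Dminus !coefB coefD coefN coefZ coefZ coefXM coef_amth coef_deriv /=.
by rewrite subr0 mulr0 subr0 mulr1n.
Qed.

Lemma coefDmS (C : numClosedFieldType) (a b mu : C) p m :
  (Dminus a b mu p)`_m.+1 = - ((m.+2)%:R * p`_m.+2)
   + (mu + a - b / 2%:R - 1) * ((a - m.+1%:R) * p`_m.+1)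
   - 1 / 4%:R * ((a - 1 - m%:R) * ((a - m%:R) * ((b - m%:R) * p`_m))).
Proof.
rewrite /Dminus !coefB coefD coefN coefZ coefZ coefXM coef_amth coef_deriv /=.
by rewrite !coef_amth mulr_natl.
Qed.

Lemma coef_ppm (C : numClosedFieldType) sgn k l m :
  (ppm C sgn k l)`_m =
  (-1) ^+ (sgn * m) / 2%:R ^+ m * (m`!)%:R * ('C(k, m))%:R * ('C(l, m))%:R.
Proof.
rewrite coef_poly; case: ltnP => // h.
case: (leqP k l) => hkl.
  by move: h; rewrite (minn_idPl hkl) => h; rewrite (bin_small h) !mulr0 mul0r.
by move: h; rewrite (minn_idPr (ltnW hkl)) => h; rewrite (bin_small h) !mulr0.
Qed.

Lemma bin_recR (C : numClosedFieldType) k m :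
  (m.+1)%:R * ('C(k, m.+1))%:R = (k%:R - m%:R) * ('C(k, m))%:R :> C.
Proof.
rewrite -natrM mul_bin_left natrM; case: (leqP m k) => h.
  by rewrite natrB.
by rewrite bin_small // !mulr0.
Qed.

Lemma ppm_rec (C : numClosedFieldType) sgn k l m :
  2%:R * (m.+1)%:R * (ppm C sgn k l)`_m.+1 =
  (-1) ^+ sgn * ((k%:R - m%:R) * ((l%:R - m%:R) * (ppm C sgn k l)`_m)).
Proof.
rewrite !coef_ppm.
set Q := (-1) ^+ (sgn * m) / 2%:R ^+ m * (m`!)%:R.
have -> : (-1) ^+ sgn * ((k%:R - m%:R) * ((l%:R - m%:R) *
   (Q * ('C(k, m))%:R * ('C(l, m))%:R))) =
   (-1) ^+ sgn * Q * (((k%:R - m%:R) * ('C(k, m))%:R) * ((l%:R - m%:R) * ('C(l, m))%:R)) :> C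
  by ring.
rewrite -(bin_recR C k m) -(bin_recR C l m) /Q mulnSr exprD !exprS factS natrM.
have h2 : (2%:R : C) != 0 by rewrite pnatr_eq0.
field.
by rewrite expf_neq0.
Qed.

Lemma ppm_rec' (C : numClosedFieldType) sgn k l m :
  (ppm C sgn k l)`_m.+1 =
  (-1) ^+ sgn * ((k%:R - m%:R) * ((l%:R - m%:R) * (ppm C sgn k l)`_m))
  / (2%:R * (m.+1)%:R).
Proof.
rewrite -ppm_rec; field; by rewrite addrC natr1 pnatr_eq0.
Qed.

Lemma ppm0 (C : numClosedFieldType) sgn k l : (ppm C sgn k l)`_0 = 1.
Proof. by rewrite coef_ppm muln0 !expr0 !bin0 fact0 invr1 !mulr1. Qed.

Ltac fsd := field; rewrite ?[1 + _]addrC ?natr1 -?natrD ?pnatr_eq0 ?addn_eq0 //.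

Lemma ppm_sol (C : numClosedFieldType) (k l : nat) (sgn : bool) (lam1 lam2 c : C)
  (hA1 : lam1 + k%:R - l%:R / 2%:R - 1 = - ((-1) ^+ sgn * l%:R / 2%:R))
  (hA2 : lam2 + l%:R - k%:R / 2%:R - 1 = (-1) ^+ sgn * k%:R / 2%:R) :
  SolTilde k l lam1 lam2 (c *: ppm C sgn k l).
Proof.
have h2 : (2%:R : C) != 0 by rewrite pnatr_eq0.
have h4 : (4%:R : C) != 0 by rewrite pnatr_eq0.
have hS : forall m, ((m.+1)%:R : C) != 0 by move=> m; rewrite pnatr_eq0.
split; first by rewrite (leq_trans (size_scale_leq _ _)) // size_poly.
split; apply/polyP => j; rewrite coef0; case: j => [|m].
- by rewrite coefDp0 hA1 !coefZ ppm_rec' ppm0; case: sgn hA1 hA2 => _ _ /=; fsd.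
- rewrite coefDpS hA1 !coefZ !ppm_rec'; case: sgn hA1 hA2 => _ _ /=; fsd.
- by rewrite coefDm0 hA2 !coefZ ppm_rec' ppm0; case: sgn hA1 hA2 => _ _ /=; fsd.
- by rewrite coefDmS hA2 !coefZ !ppm_rec'; case: sgn hA1 hA2 => _ _ /=; fsd.
Qed.

Lemma sol_ppm (C : numClosedFieldType) (k l : nat) (sgn : bool) (lam1 lam2 : C)
  (hkl : k != l)
  (hA1 : lam1 + k%:R - l%:R / 2%:R - 1 = - ((-1) ^+ sgn * l%:R / 2%:R))
  (hA2 : lam2 + l%:R - k%:R / 2%:R - 1 = (-1) ^+ sgn * k%:R / 2%:R) p :
  SolTilde k l lam1 lam2 p -> p = p`_0 *: ppm C sgn k l.
Proof.
have h2 : (2%:R : C) != 0 by rewrite pnatr_eq0.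
have h4 : (4%:R : C) != 0 by rewrite pnatr_eq0.
have hLK : (l%:R - k%:R : C) != 0 by rewrite subr_eq0 eqr_nat eq_sym.
case=> _ [hP hM]; apply/polyP => j; rewrite coefZ.
move Hc: (p`_0) => c.
elim: j => [|m IH]; first by rewrite ppm0 mulr1.
have eP := congr1 (fun q : {poly C} => q`_m.+1) hP; have eM := congr1 (fun q : {poly C} => q`_m.+1) hM.
rewrite /= coefDpS coef0 hA1 IH in eP; rewrite /= coefDmS coef0 hA2 IH in eM.
have eS := congr2 (fun a b : C => a + b) eP eM.
rewrite ppm_rec'.
have tn : (-1) ^+ sgn * (m.+1)%:R * (l%:R - k%:R) / 2%:R != 0 :> C.
  by rewrite !mulf_neq0 ?invr_eq0 ?signr_eq0 ?pnatr_eq0.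
apply/eqP; rewrite -subr_eq0; apply/eqP; apply: (mulfI tn); rewrite mulr0.
transitivity (0 + 0 : C); last by rewrite addr0.
rewrite -eS /=; case: sgn {hA1 hA2 eP eM eS tn IH} => /=; fsd.
Qed.

Lemma lc1 (C : numClosedFieldType) (x g a : C) : x = 0 -> g = a * x -> g = 0.
Proof. by move=> -> ->; rewrite mulr0. Qed.
Lemma lc2 (C : numClosedFieldType) (x y g a b : C) :
  x = 0 -> y = 0 -> g = a * x + b * y -> g = 0.
Proof. by move=> -> -> ->; rewrite !mulr0 addr0. Qed.
Lemma lc3 (C : numClosedFieldType) (x y z g a b c : C) :
  x = 0 -> y = 0 -> z = 0 -> g = a * x + b * y + c * z -> g = 0.
Proof. by move=> -> -> -> ->; rewrite !mulr0 !addr0. Qed.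

Lemma nec (C : numClosedFieldType) (k l : nat)
  (hk : (1 <= k)%N) (hl : (1 <= l)%N) (hkl : k != l) (lam1 lam2 : C) p :
  SolTilde k l lam1 lam2 p -> p != 0 ->
  (lam1 = 1 - k%:R /\ lam2 = 1 - l%:R + k%:R) \/
  (lam1 = 1 - k%:R + l%:R /\ lam2 = 1 - l%:R).
Proof.
have h2 : (2%:R : C) != 0 by rewrite pnatr_eq0.
have h4 : (4%:R : C) != 0 by rewrite pnatr_eq0.
have hK : (k%:R : C) != 0 by rewrite pnatr_eq0 -lt0n.
have hL : (l%:R : C) != 0 by rewrite pnatr_eq0 -lt0n.
have hKL : (k%:R - l%:R : C) != 0 by rewrite subr_eq0 eqr_nat.
case=> _ [hP hM] pn0.
have c0n : p`_0 != 0.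
  apply: contra pn0 => /eqP h0; apply/eqP/polyP => i; rewrite coef0.
  suff H : forall j, p`_j = 0 /\ p`_j.+1 = 0 by case: (H i).
  elim => [|j [Ij IS]].
    split=> //.
    have e := congr1 (fun q : {poly C} => q`_0) hP.
    by rewrite /= coefDp0 coef0 h0 !mulr0 addr0 in e.
  split=> //.
  have e := congr1 (fun q : {poly C} => q`_j.+1) hP.
  rewrite /= coefDpS coef0 Ij IS !mulr0 !addr0 in e.
  by move/eqP: e; rewrite mulf_eq0 pnatr_eq0 /= => /eqP.
have e0P := congr1 (fun q : {poly C} => q`_0) hP.
have e0M := congr1 (fun q : {poly C} => q`_0) hM.
have e1P := congr1 (fun q : {poly C} => q`_1) hP.
have e1M := congr1 (fun q : {poly C} => q`_1) hM.
rewrite /= coefDp0 coef0 in e0P; rewrite /= coefDm0 coef0 in e0M.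
rewrite /= coefDpS coef0 in e1P; rewrite /= coefDmS coef0 in e1M.
have eS := congr2 (fun a b : C => a + b) e1P e1M; rewrite /= addr0 in eS.
have hH : (lam1 + k%:R - l%:R / 2%:R - 1) * k%:R +
          (lam2 + l%:R - k%:R / 2%:R - 1) * l%:R = 0.
  apply: (mulfI c0n); rewrite mulr0.
  by apply: (@lc2 _ _ _ _ 1 1 e0P e0M); ring.
have g0 : p`_0 ^+ 2 * (k%:R - l%:R) * l%:R *
   (k%:R ^+ 2 / 4%:R - (lam2 + l%:R - k%:R / 2%:R - 1) ^+ 2) = 0.
  apply: (@lc3 _ _ _ _ _ (- (k%:R - 1) * p`_1)
              (- (k%:R - 1) * p`_1 + (lam2 + l%:R - k%:R / 2%:R - 1) * (l%:R - k%:R) * p`_0)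
              (k%:R * p`_0) e0P e0M eS).
  by field.
move/eqP: g0; rewrite !mulf_eq0 (negbTE c0n) (negbTE hKL) (negbTE hL) /=.
move=> /eqP hq.
have hq2 : ((lam2 + l%:R - k%:R / 2%:R - 1) - k%:R / 2%:R) *
           ((lam2 + l%:R - k%:R / 2%:R - 1) + k%:R / 2%:R) = 0.
  by apply: (@lc1 _ _ _ (-1) hq); field.
move/eqP: hq2; rewrite mulf_eq0 => /orP [] /eqP hc.
- left.
  have hA1 : lam1 + k%:R - l%:R / 2%:R - 1 + l%:R / 2%:R = 0.
    apply: (mulfI hK); rewrite mulr0.
    by apply: (@lc2 _ _ _ _ 1 (- l%:R) hH hc); field.
  split; apply/eqP; rewrite -subr_eq0; apply/eqP.
    by apply: (@lc1 _ _ _ 1 hA1); field.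
  by apply: (@lc1 _ _ _ 1 hc); field.
- right.
  have hA1 : lam1 + k%:R - l%:R / 2%:R - 1 - l%:R / 2%:R = 0.
    apply: (mulfI hK); rewrite mulr0.
    by apply: (@lc2 _ _ _ _ 1 (- l%:R) hH hc); field.
  split; apply/eqP; rewrite -subr_eq0; apply/eqP.
    by apply: (@lc1 _ _ _ 1 hA1); field.
  by apply: (@lc1 _ _ _ 1 hc); field.
Qed.

Theorem proposition6p3 (C : numClosedFieldType) (k l : nat)
  (hk : (1 <= k)%N) (hl : (1 <= l)%N) (hkl : k != l) :
  (forall lam1 lam2 : C,
     (exists p : {poly C}, SolTilde k l lam1 lam2 p /\ p != 0) <->
     ((lam1, lam2) = (1 - k%:R, 1 - l%:R + k%:R) \/
      (lam1, lam2) = (1 - k%:R + l%:R, 1 - l%:R)))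
  /\ (forall p : {poly C},
        SolTilde k l (1 - k%:R) (1 - l%:R + k%:R) p <->
        exists c : C, p = c *: ppm C false k l)
  /\ (forall p : {poly C},
        SolTilde k l (1 - k%:R + l%:R) (1 - l%:R) p <->
        exists c : C, p = c *: ppm C true k l).
Proof.
have h2 : (2%:R : C) != 0 by rewrite pnatr_eq0.
have hP1 : (1 - k%:R) + k%:R - l%:R / 2%:R - 1 = - ((-1) ^+ false * l%:R / 2%:R) :> C
  by rewrite expr0; field.
have hP2 : (1 - l%:R + k%:R) + l%:R - k%:R / 2%:R - 1 = (-1) ^+ false * k%:R / 2%:R :> C
  by rewrite expr0; field.
have hM1 : (1 - k%:R + l%:R) + k%:R - l%:R / 2%:R - 1 = - ((-1) ^+ true * l%:R / 2%:R) :> C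
  by rewrite expr1; field.
have hM2 : (1 - l%:R) + l%:R - k%:R / 2%:R - 1 = (-1) ^+ true * k%:R / 2%:R :> C
  by rewrite expr1; field.
have ppmn0 : forall sgn, ppm C sgn k l != 0.
  by move=> sgn; apply/eqP => /(congr1 (fun q : {poly C} => q`_0));
     rewrite ppm0 coef0; apply/eqP; exact: oner_neq0.
split; last split.
- move=> lam1 lam2; split.
    case=> p [hs pn0]; case: (@nec C k l hk hl hkl _ _ _ hs pn0) => [[-> ->]|[-> ->]].
      by left.
    by right.
  case=> -[-> ->].
    by exists (1 *: ppm C false k l); split; [by apply: ppm_sol | rewrite scale1r].
  by exists (1 *: ppm C true k l); split; [by apply: ppm_sol | rewrite scale1r].
- move=> p; split; last by case=> c ->; apply: ppm_sol.
  by move=> hs; exists p`_0; exact: (@sol_ppm C k l false _ _ hkl hP1 hP2).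
- move=> p; split; last by case=> c ->; apply: ppm_sol.
  by move=> hs; exists p`_0; exact: (@sol_ppm C k l true _ _ hkl hM1 hM2).
Qed.
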